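(* Let $\mathcal{U}$ be a measure space with measure $\mu$, $0<\mu(\mathcal{U})<\infty$, and equip $\mathcal{U}^n$ with the product measure. For $i\in[n]$ let $\mathcal{X}_i$ be a family of measurable subsets of $\mathcal{U}$ and let $Q_i\subseteq\mathcal{U}$ be a set of $m$ points with $\mathbf{D}(Q_i,\mathcal{X}_i)\le\varepsilon_i$; let $\sigma_i:[m]\to Q_i$ be injective. Let $P_R\subseteq[m]^n$ be a finite point collection (multiset) with discrepancy at most $\varepsilon_R$ against combinatorial rectangles, i.e. $\left|\frac{|P_R\cap(I_1\times\cdots\times I_n)|}{|P_R|}-\prod_{j=1}^n\frac{|I_j|}{m}\right|\le\varepsilon_R$ for all $I_1,\dots,I_n\subseteq[m]$. Define $\sigma(a_1,\dots,a_n)=(\sigma_1(a_1),\dots,\sigma_n(a_n))$ and the multiset $Q_{[n]}=\{\sigma(p):p\in P_R\}\subseteq\mathcal{U}^n$. Then \[ \mathbf{D}(Q_{[n]},\mathcal{X}_{[n]})\le\varepsilon_R+\sum_{i=1}^n\varepsilon_i, \] where $\mathcal{X}_{[n]}=\{X_1\times\cdots\times X_n: X_i\in\mathcal{X}_i\}$.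
   Context: $[r]=\{1,\dots,r\}$. Discrepancy: $\mathbf{D}(P,\mathcal{X})=\sup_{X\in\mathcal{X}}\left|\frac{|P\cap X|}{|P|}-\frac{\mu(X)}{\mu(\mathcal{U})}\right|$, with points counted with multiplicity. A combinatorial rectangle in $[m]^n$ is a set $I_1\times\cdots\times I_n$ with each $I_j\subseteq[m]$. *)

(* Defs.v *)
From Stdlib Require Import Reals List ClassicalEpsilon.
Import ListNotations.
Open Scope R_scope.
Set Implicit Arguments.

Definition is_sigma_algebra {U : Type} (M : (U -> Prop) -> Prop) : Prop :=
  M (fun _ => True) /\
  (forall A, M A -> M (fun x => ~ A x)) /\
  (forall F : nat -> U -> Prop, (forall k, M (F k)) -> M (fun x => exists k, F k x)).

Definition is_finite_measure {U : Type} (M : (U -> Prop) -> Prop)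
    (mu : (U -> Prop) -> R) : Prop :=
  is_sigma_algebra M /\
  mu (fun _ => False) = 0 /\
  (forall A, M A -> 0 <= mu A) /\
  (forall F : nat -> U -> Prop,
      (forall k, M (F k)) ->
      (forall k l, k <> l -> forall x, F k x -> F l x -> False) ->
      infinite_sum (fun k => mu (F k)) (mu (fun x => exists k, F k x))).

Definition indic {T : Type} (A : T -> Prop) (x : T) : R :=
  if excluded_middle_informative (A x) then 1 else 0.
Definition cnt {T : Type} (P : list T) (A : T -> Prop) : R :=
  fold_right (fun x acc => indic A x + acc) 0 P.
Definition frac {T : Type} (P : list T) (A : T -> Prop) : R :=
  cnt P A / INR (length P).

Definition sumR (n : nat) (f : nat -> R) : R := fold_right Rplus 0 (map f (seq 0 n)).
Definition prodR (n : nat) (f : nat -> R) : R := fold_right Rmult 1 (map f (seq 0 n)).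

(* The product set X_0 x ... x X_{n-1}; points of T^n are functions nat -> T
   (only coordinates < n matter). *)
Definition box {T : Type} (n : nat) (X : nat -> T -> Prop) : (nat -> T) -> Prop :=
  fun x => forall i, (i < n)%nat -> X i (x i).

Definition disc_le {U : Type} (mu : (U -> Prop) -> R) (P : list U)
    (Xfam : (U -> Prop) -> Prop) (eps : R) : Prop :=
  forall X, Xfam X -> Rabs (frac P X - mu X / mu (fun _ => True)) <= eps.

(* D(P, X_[n]) <= eps in U^n with the product measure: the product measure of
   X_0 x ... x X_{n-1} is prod mu(X_i), and of U^n is mu(U)^n. *)
Definition disc_prod_le {U : Type} (mu : (U -> Prop) -> R) (n : nat)
    (P : list (nat -> U)) (Xfam : nat -> (U -> Prop) -> Prop) (eps : R) : Prop :=
  forall X : nat -> U -> Prop, (forall i, (i < n)%nat -> Xfam i (X i)) ->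
    Rabs (frac P (box n X) - prodR n (fun i => mu (X i) / mu (fun _ => True))) <= eps.

(* Discrepancy of P subset [m]^n (0-based: {0..m-1}^n) against combinatorial
   rectangles is at most eps. *)
Definition comb_disc_le (n m : nat) (P : list (nat -> nat)) (eps : R) : Prop :=
  forall I : nat -> nat -> Prop, (forall j a, I j a -> (a < m)%nat) ->
    Rabs (frac P (box n I) - prodR n (fun j => cnt (seq 0 m) (I j) / INR m)) <= eps.

(* Main.v *)
Require Import Defs.
From Stdlib Require Import Reals List.
From Stdlib Require Import ClassicalEpsilon Classical Permutation Lra Lia FunctionalExtensionality PropExtensionality.
Open Scope R_scope.

Lemma cnt_map {A B : Type} (f : A -> B) (l : list A) (P : B -> Prop) :
  cnt (map f l) P = cnt l (fun x => P (f x)).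
Proof. induction l; simpl; [reflexivity|]. unfold cnt in *; simpl. rewrite IHl. reflexivity. Qed.

Lemma cnt_ext {A : Type} (l : list A) (P P' : A -> Prop) :
  (forall x, In x l -> (P x <-> P' x)) -> cnt l P = cnt l P'.
Proof.
  induction l; intros H; [reflexivity|]. unfold cnt in *; simpl.
  rewrite IHl by (intros; apply H; simpl; auto).
  f_equal. unfold indic.
  destruct (excluded_middle_informative (P a)), (excluded_middle_informative (P' a)); auto;
  exfalso; pose proof (H a (or_introl eq_refl)); tauto.
Qed.

Lemma cnt_perm {A : Type} (l l' : list A) (P : A -> Prop) :
  Permutation l l' -> cnt l P = cnt l' P.
Proof.
  induction 1; unfold cnt in *; simpl; try lra.
Qed.

Lemma cnt_bounds {A : Type} (l : list A) (P : A -> Prop) :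
  0 <= cnt l P <= INR (length l).
Proof.
  induction l; unfold cnt in *; [simpl; lra|].
  change (length (a :: l)) with (S (length l)). rewrite S_INR. simpl.
  set (c := fold_right _ 0 l) in *.
  unfold indic; destruct excluded_middle_informative; lra.
Qed.

Lemma div01 (x y : R) : 0 <= x <= y -> 0 < y -> 0 <= x / y <= 1.
Proof.
  intros Hx Hy. pose proof (Rinv_0_lt_compat y Hy).
  unfold Rdiv. split; [nra|].
  replace 1 with (y * / y) by (field; lra). nra.
Qed.

Lemma prod_tel (l : list nat) (a b e : nat -> R) :
  (forall j, In j l -> 0 <= a j <= 1 /\ 0 <= b j <= 1 /\ Rabs (a j - b j) <= e j) ->
  Rabs (fold_right Rmult 1 (map a l) - fold_right Rmult 1 (map b l))
    <= fold_right Rplus 0 (map e l)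
  /\ 0 <= fold_right Rmult 1 (map a l) <= 1 /\ 0 <= fold_right Rmult 1 (map b l) <= 1.
Proof.
  induction l as [|j l IH]; intros H; simpl.
  - rewrite Rminus_diag, Rabs_R0. lra.
  - destruct (H j (or_introl eq_refl)) as [Ha [Hb He]].
    destruct IH as [IH1 [IH2 IH3]]; [intros; apply H; simpl; auto|].
    set (A := fold_right Rmult 1 (map a l)) in *.
    set (B := fold_right Rmult 1 (map b l)) in *.
    split; [|split; split; nra].
    replace (a j * A - b j * B) with (a j * (A - B) + (a j - b j) * B) by ring.
    eapply Rle_trans; [apply Rabs_triang|].
    rewrite !Rabs_mult, (Rabs_pos_eq (a j)), (Rabs_pos_eq B) by lra.
    assert (0 <= Rabs (A - B)) by apply Rabs_pos.
    assert (0 <= Rabs (a j - b j)) by apply Rabs_pos.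
    nra.
Qed.

Lemma mu_le {U : Type} (M : (U -> Prop) -> Prop) (mu : (U -> Prop) -> R)
  (Hmu : is_finite_measure M mu) (X : U -> Prop) : M X -> mu X <= mu (fun _ => True).
Proof.
  intros HX. destruct Hmu as [[HT [HC HU]] [H0 [Hpos Hadd]]].
  set (F := fun k : nat => match k with 0%nat => X | 1%nat => (fun x => ~ X x) | _ => (fun _ => False) end).
  assert (HF : forall k, M (F k)).
  { intros [|[|k]]; simpl; auto.
    replace (fun _ : U => False) with (fun x : U => ~ (fun _ : U => True) x); auto.
    apply functional_extensionality; intros; apply propositional_extensionality; tauto. }
  assert (Hd : forall k l, k <> l -> forall x, F k x -> F l x -> False).
  { intros [|[|k]] [|[|l]] Hkl x; simpl; tauto || lia. }
  pose proof (Hadd F HF Hd) as Hs.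
  replace (fun x => exists k, F k x) with (fun _ : U => True) in Hs.
  2:{ apply functional_extensionality; intros x; apply propositional_extensionality; split; auto.
      intros _. destruct (classic (X x)); [exists 0%nat|exists 1%nat]; simpl; auto. }
  assert (Hs2 : infinite_sum (fun k => mu (F k)) (mu X + mu (fun x => ~ X x))).
  { intros eps Heps. exists 1%nat. intros k Hk.
    replace (sum_f_R0 (fun k => mu (F k)) k) with (mu X + mu (fun x => ~ X x)).
    - unfold Rdist. rewrite Rminus_diag, Rabs_R0; lra.
    - induction k; [lia|]. destruct (Nat.eq_dec k 0).
      + subst; simpl; ring.
      + simpl. rewrite <- IHk by lia. destruct k; [lia|]. simpl F. rewrite H0. ring. }
  rewrite (uniqueness_sum _ _ _ Hs Hs2).
  pose proof (Hpos _ (HC _ HX)). lra.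
Qed.

Theorem mainTheorem11
  (U : Type) (M : (U -> Prop) -> Prop) (mu : (U -> Prop) -> R)
  (Hmu : is_finite_measure M mu) (HmuU : 0 < mu (fun _ => True))
  (n m : nat)
  (Xfam : nat -> (U -> Prop) -> Prop)
  (HXmeas : forall i, (i < n)%nat -> forall A, Xfam i A -> M A)
  (Q : nat -> list U) (eps : nat -> R)
  (HQlen : forall i, (i < n)%nat -> length (Q i) = m)
  (HQnodup : forall i, (i < n)%nat -> NoDup (Q i))
  (HQdisc : forall i, (i < n)%nat -> disc_le mu (Q i) (Xfam i) (eps i))
  (sigma : nat -> nat -> U)
  (Hsig_in : forall i, (i < n)%nat -> forall a, (a < m)%nat -> In (sigma i a) (Q i))
  (Hsig_inj : forall i, (i < n)%nat -> forall a b, (a < m)%nat -> (b < m)%nat ->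
       sigma i a = sigma i b -> a = b)
  (PR : list (nat -> nat)) (epsR : R)
  (HPR : forall p, In p PR -> forall j, (j < n)%nat -> (p j < m)%nat)
  (HPRdisc : comb_disc_le n m PR epsR) :
  disc_prod_le mu n (map (fun p => fun i => sigma i (p i)) PR) Xfam
    (epsR + sumR n eps).
Proof.
  intros X HX.
  set (I := fun j a => (a < m)%nat /\ X j (sigma j a)).
  assert (HI : forall j a, I j a -> (a < m)%nat) by (unfold I; tauto).
  specialize (HPRdisc I HI).
  assert (Hfr : frac (map (fun p => fun i => sigma i (p i)) PR) (box n X) = frac PR (box n I)).
  { unfold frac. rewrite length_map, cnt_map. f_equal. apply cnt_ext.
    intros p Hp. unfold box, I. split; intros H i Hi; [split; auto|apply H; auto]. }
  set (a := fun j => cnt (seq 0 m) (I j) / INR m).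
  set (b := fun i => mu (X i) / mu (fun _ => True)).
  assert (Hab : forall j, In j (seq 0 n) -> 0 <= a j <= 1 /\ 0 <= b j <= 1 /\ Rabs (a j - b j) <= eps j).
  { intros j Hj. apply in_seq in Hj. assert (Hjn : (j < n)%nat) by lia.
    assert (Ha : a j = frac (Q j) (X j)).
    { unfold a, frac. rewrite HQlen by auto. f_equal.
      rewrite (cnt_ext (seq 0 m) (I j) (fun x => X j (sigma j x))).
      2:{ intros x Hx; apply in_seq in Hx; unfold I; split; [tauto|split; auto; lia]. }
      rewrite <- cnt_map. apply cnt_perm.
      apply NoDup_Permutation_bis.
      - apply FinFun.Injective_map_NoDup_in; [|apply seq_NoDup].
        intros x y Hx Hy; apply in_seq in Hx; apply in_seq in Hy; apply Hsig_inj; auto; lia.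
      - rewrite length_map, length_seq, HQlen; auto.
      - intros u Hu. apply in_map_iff in Hu as [x [<- Hx]]. apply in_seq in Hx. apply Hsig_in; auto; lia. }
    split; [|split].
    - unfold a. pose proof (cnt_bounds (seq 0 m) (I j)) as Hc. rewrite length_seq in Hc.
      destruct (Nat.eq_dec m 0) as [->|Hm].
      + simpl. unfold Rdiv. rewrite Rinv_0. lra.
      + assert (0 < INR m) by (apply lt_0_INR; lia).
        apply div01; lra.
    - unfold b. pose proof (HXmeas j Hjn _ (HX j Hjn)) as HM.
      pose proof (mu_le M mu Hmu _ HM).
      destruct Hmu as [_ [_ [Hpos _]]]. pose proof (Hpos _ HM).
      apply div01; lra.
    - rewrite Ha. apply (HQdisc j Hjn). apply HX; auto. }
  destruct (prod_tel (seq 0 n) a b eps Hab) as [Ht _].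
  rewrite Hfr. unfold prodR, sumR in *.
  fold b. change (fun j => cnt (seq 0 m) (I j) / INR m) with a in HPRdisc.
  set (PA := fold_right Rmult 1 (map a (seq 0 n))) in *.
  set (PB := fold_right Rmult 1 (map b (seq 0 n))) in *.
  replace (frac PR (box n I) - PB) with ((frac PR (box n I) - PA) + (PA - PB)) by ring.
  eapply Rle_trans; [apply Rabs_triang|]. lra.
Qed.
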